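(* Let $\mathcal{G}=\{\mathcal{V},\mathcal{E},\boldsymbol{W}\}$ be a connected undirected weighted graph with $N$ vertices, with graph Laplacian $\boldsymbol{L}=\boldsymbol{D}-\boldsymbol{W}=\boldsymbol{U}\boldsymbol{\Lambda}\boldsymbol{U}^T$, where $\boldsymbol{U}=[\boldsymbol{u}_1,\dots,\boldsymbol{u}_N]$ is orthonormal and the eigenvalues are ordered $0=\lambda_1\le\dots\le\lambda_N$. Fix integers $1\le f_L\le f_U\le N$ and let $$C_b=\{\boldsymbol{x}\in\mathbb{R}^N:\ \boldsymbol{u}_i^T\boldsymbol{x}=0\ \text{for all } i\notin[f_L,f_U]\}.$$ Let $\mathcal{V}'=\{v_1,\dots,v_M\}\subseteq\mathcal{V}=\{1,\dots,N\}$ be a set of $M$ distinct sampled vertices and let $\boldsymbol{x}\in C_b$ be a signal with observed signs $s_i=\mathrm{sign}(x_{v_i})\in\{-1,0,1\}$, $i=1,\dots,M$ (with $\mathrm{sign}(0)=0$). Let $$C_v=\{\boldsymbol{y}\in\mathbb{R}^N:\ s_i y_{v_i}\ge 0 \text{ if } s_i\neq 0,\ y_{v_i}=0 \text{ if } s_i=0,\ i=1,\dots,M\},$$ and $C=C_b\cap C_v$. Define $\boldsymbol{P}_b=\boldsymbol{U}\boldsymbol{\Gamma}\boldsymbol{U}^T$, where $\boldsymbol{\Gamma}$ is diagonal with $\Gamma_{kk}=1$ if $k\in[f_L,f_U]$ and $0$ otherwise, and define $\boldsymbol{P}_v:\mathbb{R}^N\to\mathbb{R}^N$ by $(\boldsymbol{P}_v\boldsymbol{y})_j=0$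 if $j=v_i$ for some $i$ with $\mathrm{sign}(y_j)\neq s_i$, and $(\boldsymbol{P}_v\boldsymbol{y})_j=y_j$ otherwise. For an arbitrary initial point $\boldsymbol{x}_0\in\mathbb{R}^N$ define $\boldsymbol{x}_{n+1}=\boldsymbol{P}_b\boldsymbol{P}_v\boldsymbol{x}_n$. Then the sequence $\{\boldsymbol{x}_n\}$ converges to some point $\boldsymbol{x}^*\in C$, and the convergence rate is independent of the choice of the initial point $\boldsymbol{x}_0$.
   Context: $\boldsymbol{D}$ is the diagonal degree matrix with $D_{ii}=\sum_j W_{ij}$, and $W_{ij}>0$ iff $(i,j)\in\mathcal{E}$. $C_b$ is the set of band-limited signals with passband $[f_L,f_U]$; $\boldsymbol{P}_b$ is the orthogonal projection onto $C_b$ and $\boldsymbol{P}_v$ is the projection onto the closed convex cone $C_v$ of signals consistent with the observed signs. *)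

(* Defs.v *)
From HB Require Import structures.
From mathcomp Require Import all_boot all_order all_algebra.
From mathcomp Require Import all_classical all_reals all_analysis.
Set Implicit Arguments. Unset Strict Implicit. Unset Printing Implicit Defensive.
Import Order.TTheory GRing.Theory Num.Theory.
Local Open Scope ring_scope.
Local Open Scope classical_set_scope.

Section GraphSignal.
Variable R : realType.

Definition degmx n (W : 'M[R]_n) : 'M[R]_n := diag_mx (\row_i \sum_j W i j).

Definition laplacian n (W : 'M[R]_n) : 'M[R]_n := degmx W - W.

Definition adjrel n (W : 'M[R]_n) : rel 'I_n := fun i j => 0 < W i j.

Definition connected_graph n (W : 'M[R]_n) : Prop :=
  forall i j : 'I_n, connect (adjrel W) i j.

(* 0-based index k corresponds to the paper's index k+1 *)
Definition in_band n (fL fU : nat) (k : 'I_n) : bool := (fL <= k.+1 <= fU)%N.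

Definition Cb n (U : 'M[R]_n) (fL fU : nat) : set 'cV[R]_n :=
  [set x | forall i : 'I_n, ~~ in_band fL fU i -> (U^T *m x) i 0 = 0].

Definition Cv n M (v : 'I_M -> 'I_n) (s : 'I_M -> R) : set 'cV[R]_n :=
  [set y | forall i : 'I_M,
     (s i != 0 -> 0 <= s i * y (v i) 0) /\ (s i = 0 -> y (v i) 0 = 0)].

Definition Pb n (U : 'M[R]_n) (fL fU : nat) : 'M[R]_n :=
  U *m diag_mx (\row_k (if in_band fL fU k then 1 else 0)) *m U^T.

Definition Pv n M (v : 'I_M -> 'I_n) (s : 'I_M -> R) (y : 'cV[R]_n) : 'cV[R]_n :=
  \col_j (if [exists i : 'I_M, (v i == j) && (Num.sg (y j 0) != s i)]
          then 0 else y j 0).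

Definition enorm n (x : 'cV[R]_n) : R := Num.sqrt (\sum_j (x j 0) ^+ 2).

End GraphSignal.

(* Main.v *)
Require Import Defs.
From HB Require Import structures.
From mathcomp Require Import all_boot all_order all_algebra.
From mathcomp Require Import all_classical all_reals all_analysis.
From mathcomp Require Import ring lra.
Import Order.TTheory GRing.Theory Num.Theory numFieldNormedType.Exports.
Local Open Scope ring_scope.
Local Open Scope classical_set_scope.

Section Aux.
Variable R : realType.
Variable N : nat.
Local Notation vec := 'cV[R]_N.
Implicit Types x w z y d : vec.

Definition sqn (x : vec) : R := \sum_j x j 0 ^+ 2.
Definition l1 (x : vec) : R := \sum_j `|x j 0|.

Lemma sqn_ge0 x : 0 <= sqn x.
Proof. by apply: sumr_ge0 => j _; rewrite sqr_ge0. Qed.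

Lemma l1_ge0 x : 0 <= l1 x.
Proof. by apply: sumr_ge0 => j _. Qed.

Lemma l1_tri x w z : l1 (x - z) <= l1 (x - w) + l1 (w - z).
Proof.
rewrite /l1 -big_split /=; apply: ler_sum => j _; rewrite !mxE.
have -> : x j 0 - z j 0 = (x j 0 - w j 0) + (w j 0 - z j 0) by rewrite addrA subrK.
exact: ler_normD.
Qed.

Lemma l1Z a x : l1 (a *: x) = `|a| * l1 x.
Proof. by rewrite /l1 mulr_sumr; apply: eq_bigr => j _; rewrite mxE normrM. Qed.

Lemma l1_0 : l1 0 = 0.
Proof. by rewrite /l1 big1 // => j _; rewrite mxE normr0. Qed.

Lemma coord_le_sum (F : 'I_N -> R) j : (forall k, 0 <= F k) -> F j <= \sum_k F k.
Proof.
move=> F0; rewrite (bigD1 j) //= lerDl; apply: sumr_ge0 => k _; exact: F0.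
Qed.

Lemma sqn_le_l1 x : sqn x <= l1 x ^+ 2.
Proof.
rewrite /sqn expr2 /l1 mulr_suml; apply: ler_sum => j _.
have -> : x j 0 ^+ 2 = `|x j 0| * `|x j 0| by rewrite -normrM -expr2 ger0_norm // sqr_ge0.
apply: ler_wpM2l => //.
exact: (coord_le_sum (fun k => `|x k 0|)).
Qed.

Lemma coord_sq_le x j : x j 0 ^+ 2 <= sqn x.
Proof. by apply: (coord_le_sum (fun k => x k 0 ^+ 2)) => k; rewrite sqr_ge0. Qed.

Lemma mxB_entry x y j : (x - y) j 0 = x j 0 - y j 0.
Proof. by rewrite !mxE. Qed.

Lemma mxD_entry x y j : (x + y) j 0 = x j 0 + y j 0.
Proof. by rewrite !mxE. Qed.
Lemma mxZ_entry a x j : (a *: x) j 0 = a * x j 0.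
Proof. by rewrite !mxE. Qed.

Lemma sqn_tri a b z : sqn (a - b) <= 2 * sqn (a - z) + 2 * sqn (b - z).
Proof.
rewrite /sqn !mulr_sumr -big_split; apply: ler_sum => j _; rewrite /= !mxE.
have := sqr_ge0 (a j 0 - z j 0 + (b j 0 - z j 0)).
lra.
Qed.

Lemma sum_bound (c d : 'I_N -> R) e : 0 <= e -> (forall k, d k ^+ 2 <= e) ->
  `|\sum_k c k * d k| <= (\sum_k `|c k|) * Num.sqrt e.
Proof.
move=> e0 h; apply: le_trans (ler_norm_sum _ _ _) _; rewrite mulr_suml.
apply: ler_sum => k _; rewrite normrM; apply: ler_wpM2l => //.
rewrite -sqrtr_sqr; exact: ler_wsqrtr.
Qed.

Definition viol (c : 'I_N * R) (x : vec) : R := Num.max 0 (- (c.2 * x c.1 0)).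
Definition Vs (cs : seq ('I_N * R)) x := \sum_(c <- cs) viol c x.
Definition Bs (cs : seq ('I_N * R)) (x : vec) := forall c, c \in cs -> 0 <= c.2 * x c.1 0.
Definition subsp (A : set vec) := A 0 /\ forall a x y, A x -> A y -> A (a *: x + y).

Lemma viol_ge0 c x : 0 <= viol c x.
Proof. by rewrite /viol le_max lexx. Qed.

Lemma Vs_ge0 cs x : 0 <= Vs cs x.
Proof. by rewrite /Vs; apply: sumr_ge0 => c _; exact: viol_ge0. Qed.

Lemma Vs_cons c cs x : Vs (c :: cs) x = viol c x + Vs cs x.
Proof. by rewrite /Vs big_cons. Qed.

Lemma Vs_lip cs x w : (forall c, c \in cs -> c.2 = 1 \/ c.2 = -1) ->
  Vs cs w <= Vs cs x + (size cs)%:R * l1 (x - w).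
Proof.
elim: cs => [|c cs IH] Hs; first by rewrite /Vs !big_nil mul0r addr0.
rewrite !Vs_cons /= -add1n natrD mulrDl mul1r.
have -> : viol c x + Vs cs x + (l1 (x - w) + (size cs)%:R * l1 (x - w)) =
  (viol c x + l1 (x - w)) + (Vs cs x + (size cs)%:R * l1 (x - w)) by ring.
apply: lerD; last by apply: IH => c' hc'; apply: Hs; rewrite in_cons hc' orbT.
have hc : c.2 = 1 \/ c.2 = -1 by apply: Hs; rewrite mem_head.
have hj : `|x c.1 0 - w c.1 0| <= l1 (x - w).
  by rewrite /l1 (bigD1 c.1) //= !mxE lerDl; apply: sumr_ge0.
have m1 : forall a : R, 0 <= Num.max 0 a by move=> a; rewrite le_max lexx.
have m2 : forall a : R, a <= Num.max 0 a by move=> a; rewrite le_max lexx orbT.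
rewrite /viol ge_max; apply/andP; split.
  by apply: addr_ge0 => //; apply: le_trans hj.
apply: le_trans (lerD (m2 _) hj).
have := ler_norm (x c.1 0 - w c.1 0); have := ler_norm (- (x c.1 0 - w c.1 0)).
rewrite normrN; case: hc => ->; rewrite ?mul1r ?mulN1r ?opprK; lra.
Qed.


Lemma maxge0 (a : R) : 0 <= Num.max 0 a. Proof. by rewrite le_max lexx. Qed.
Lemma maxgeR (a : R) : a <= Num.max 0 a. Proof. by rewrite le_max lexx orbT. Qed.

Lemma max0_id (a : R) : 0 <= a -> Num.max 0 a = a.
Proof. by move=> h; apply/eqP; rewrite eq_le maxgeR ge_max lexx h. Qed.
Lemma max0_0 (a : R) : a <= 0 -> Num.max 0 a = 0.
Proof. by move=> h; apply/eqP; rewrite eq_le maxge0 ge_max lexx h. Qed.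

Lemma subsp_sub A x y : subsp A -> A x -> A y -> A (x - y).
Proof.
move=> [A0 Acl] Ax Ay.
have Ay' : A (- y) by have := Acl (-1) y 0 Ay A0; rewrite addr0 scaleN1r.
by have := Acl 1 x (- y) Ax Ay'; rewrite scale1r.
Qed.

Lemma hoffman cs : (forall c, c \in cs -> c.2 = 1 \/ c.2 = -1) ->
  forall A : set vec, subsp A -> exists k, 0 <= k /\
    forall x, A x -> exists z, A z /\ Bs cs z /\ l1 (x - z) <= k * Vs cs x.
Proof.
elim: cs => [|c cs IH] Hsig A [A0 Acl].
  exists 0; split => // x Ax; exists x; split => //; split.
    by move=> c; rewrite in_nil.
  by rewrite subrr l1_0 mul0r.
have Hc : c.2 = 1 \/ c.2 = -1 by apply: Hsig; rewrite mem_head.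
have Hcs : forall c', c' \in cs -> c'.2 = 1 \/ c'.2 = -1.
  by move=> c' h; apply: Hsig; rewrite in_cons h orbT.
pose A' := fun y : vec => A y /\ y c.1 0 = 0.
have sA' : subsp A'.
  split; first by split => //; rewrite mxE.
  move=> a y1 y2 [Ay1 y10] [Ay2 y20]; split; first exact: Acl.
  by rewrite !mxE y10 y20 mulr0 addr0.
have [k2 [k2ge H2]] := IH Hcs A (conj A0 Acl).
have [k' [k'ge H']] := IH Hcs A' sA'.
have [g [gge Hg]] : exists g, 0 <= g /\ forall x, A x ->
    exists w, A' w /\ l1 (x - w) <= g * `|x c.1 0|.
  case: (pselect (exists d, A d /\ d c.1 0 != 0)) => [[d [Ad dn0]] | nod].
    exists (l1 d / `|d c.1 0|); split; first by rewrite divr_ge0 ?l1_ge0.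
    move=> x Ax; exists (x - (x c.1 0 / d c.1 0) *: d); split.
      split.
        by have := Acl (- (x c.1 0 / d c.1 0)) d x Ad Ax; rewrite scaleNr addrC.
      by rewrite !mxE divfK // subrr.
    rewrite opprB addrC subrK l1Z normrM normfV le_eqVlt; apply/orP; left; apply/eqP.
    by ring.
  exists 0; split => // x Ax; exists x; split; last by rewrite subrr l1_0 mul0r.
  split => //; apply/eqP; apply/negPn/negP => hx; apply: nod; exists x; split => //.
set m : R := (size cs)%:R.
have mge : 0 <= m by rewrite /m ler0n.
exists (g + k' * (1 + m * g) + k2 + k'); split.
  by rewrite !addr_ge0 ?mulr_ge0 ?addr_ge0 ?mulr_ge0.
move=> x Ax; rewrite Vs_cons.
have vge := viol_ge0 c x; have Vge := Vs_ge0 cs x.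
case: (leP (c.2 * x c.1 0) 0) => hx.
  have hv : `|x c.1 0| = viol c x.
    rewrite /viol; case: Hc hx => ->; rewrite ?mul1r ?mulN1r ?opprK => hx.
      by rewrite ler0_norm // max0_id // oppr_ge0.
    by rewrite ger0_norm ?max0_id // -oppr_le0.
  have [w [[Aw w0] hw]] := Hg x Ax.
  have [z [[Az z0] [Bz hz]]] := H' w (conj Aw w0).
  exists z; split => //; split.
    move=> c'; rewrite in_cons => /orP[/eqP -> | /Bz //].
    by rewrite z0 mulr0.
  have hl := Vs_lip cs x w Hcs.
  rewrite -/m -hv in hl *.
  apply: le_trans (l1_tri x w z) _.
  have e1 : l1 (w - z) <= k' * (Vs cs x + m * (g * `|x c.1 0|)).
    apply: le_trans hz _; apply: ler_wpM2l => //; apply: le_trans hl _.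
    by apply: lerD => //; apply: ler_wpM2l.
  have h1 := normr_ge0 (x c.1 0).
  have p1 : 0 <= g * Vs cs x by apply: mulr_ge0.
  have p2 : 0 <= k' * `|x c.1 0| by apply: mulr_ge0.
  have p3 : 0 <= k' * m * g * Vs cs x by rewrite !mulr_ge0.
  have p4 : 0 <= k2 * `|x c.1 0| by apply: mulr_ge0.
  have p5 : 0 <= k2 * Vs cs x by apply: mulr_ge0.
  have p6 : 0 <= k' * Vs cs x by apply: mulr_ge0.
  have e2 : g * `|x c.1 0| + k' * (Vs cs x + m * (g * `|x c.1 0|)) <=
     (g + k' * (1 + m * g) + k2 + k') * (`|x c.1 0| + Vs cs x).
    have -> : (g + k' * (1 + m * g) + k2 + k') * (`|x c.1 0| + Vs cs x) =
      g * `|x c.1 0| + k' * (Vs cs x + m * (g * `|x c.1 0|)) +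
      (g * Vs cs x + k' * `|x c.1 0| + k' * m * g * Vs cs x + k2 * `|x c.1 0|
       + k2 * Vs cs x + k' * `|x c.1 0| + k' * Vs cs x) by ring.
    by rewrite lerDl !addr_ge0.
  by apply: le_trans e2; apply: lerD.
have hv : viol c x = 0 by rewrite /viol max0_0 // oppr_le0 ltW.
rewrite hv add0r.
have [z2 [Az2 [Bz2 h2]]] := H2 x Ax.
case: (leP 0 (c.2 * z2 c.1 0)) => hz2.
  exists z2; split => //; split.
    by move=> c'; rewrite in_cons => /orP[/eqP -> | /Bz2 //].
  apply: le_trans h2 _; apply: ler_wpM2r => //; have := mulr_ge0 k'ge (addr_ge0 ler01 (mulr_ge0 mge gge)); lra.
set t := x c.1 0 / (x c.1 0 - z2 c.1 0).
have dn0 : x c.1 0 - z2 c.1 0 != 0.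
  apply/eqP => h; have e : x c.1 0 = z2 c.1 0 by apply/eqP; rewrite -subr_eq0 h.
  by rewrite e in hx; lra.
have [t0 t1] : 0 <= t /\ t <= 1.
  case: Hc hx hz2 => ->; rewrite ?mul1r ?mulN1r => hx hz2.
    have dp : 0 < x c.1 0 - z2 c.1 0 by lra.
    split; first by rewrite /t divr_ge0 // ltW.
    by rewrite /t ler_pdivrMr // mul1r; lra.
  have dp : 0 < z2 c.1 0 - x c.1 0 by lra.
  have -> : t = (- x c.1 0) / (z2 c.1 0 - x c.1 0) by rewrite /t -[z2 c.1 0 - x c.1 0]opprB invrN mulrNN.
  split; first by rewrite divr_ge0 // ltW // -oppr_gt0.
  by rewrite ler_pdivrMr // mul1r; lra.
pose w := t *: (z2 - x) + x.
have Aw : A w by apply: (Acl) => //; exact: (subsp_sub A z2 x (conj A0 Acl)).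
have w0 : w c.1 0 = 0.
  by rewrite /w !mxE /t -[z2 c.1 0 - x c.1 0]opprB mulrN divfK // addNr.
have hV : Vs cs w <= Vs cs x.
  rewrite /Vs !big_seq; apply: ler_sum => c' hc'.
  have hz' := Bz2 c' hc'.
  rewrite /viol /w !mxE ge_max maxge0 /=.
  set sx := c'.2 * x c'.1 0.
  have e : - (c'.2 * (t * (z2 c'.1 0 - x c'.1 0) + x c'.1 0)) =
       - (t * (c'.2 * z2 c'.1 0)) - (1 - t) * sx by rewrite /sx; ring.
  rewrite e.
  have p1 := mulr_ge0 t0 hz'.
  case: (leP sx 0) => hs.
    rewrite (max0_id (- sx)); last by rewrite oppr_ge0.
    have : t * sx <= 0 by rewrite mulr_ge0_le0.
    lra.
  rewrite (max0_0 (- sx)); last by rewrite oppr_le0 ltW.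
  have : 0 <= (1 - t) * sx by apply: mulr_ge0; [rewrite subr_ge0 | apply: ltW].
  lra.
have [z1 [[Az1 z10] [Bz1 h1]]] := H' w (conj Aw w0).
exists z1; split => //; split.
  move=> c'; rewrite in_cons => /orP[/eqP -> | /Bz1 //].
  by rewrite z10 mulr0.
have exw : x - w = t *: (x - z2).
  by apply/matrixP => i j; rewrite !mxE; ring.
apply: le_trans (l1_tri x w z1) _.
rewrite exw l1Z ger0_norm //.
have e1 : t * l1 (x - z2) <= k2 * Vs cs x.
  apply: le_trans h2; rewrite -[X in _ <= X]mul1r; apply: ler_wpM2r => //; exact: l1_ge0.
have e2 : l1 (w - z1) <= k' * Vs cs x.
  by apply: le_trans h1 _; apply: ler_wpM2l.
have p1 : 0 <= g * Vs cs x by apply: mulr_ge0.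
have p2 : 0 <= k' * (1 + m * g) * Vs cs x by rewrite !mulr_ge0 ?addr_ge0 ?mulr_ge0.
have -> : (g + k' * (1 + m * g) + k2 + k') * Vs cs x =
  g * Vs cs x + k' * (1 + m * g) * Vs cs x + k2 * Vs cs x + k' * Vs cs x by ring.
lra.
Qed.


End Aux.
Arguments sqn {R N}. Arguments l1 {R N}. Arguments viol {R N}. Arguments Vs {R N}.
Arguments Bs {R N}. Arguments subsp {R N}.
Arguments sqn_ge0 {R N}. Arguments l1_ge0 {R N}. Arguments coord_sq_le {R N}.
Arguments sqn_le_l1 {R N}. Arguments max0_id {R}. Arguments max0_0 {R}.
Arguments viol_ge0 {R N}. Arguments Vs_ge0 {R N}. Arguments hoffman {R N}.
Arguments coord_le_sum {R N}.
Arguments mxB_entry {R N}. Arguments sqn_tri {R N}. Arguments sum_bound {R N}.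
Arguments mxD_entry {R N}. Arguments mxZ_entry {R N}.

Section An.
Variable R : realType.

Lemma geo0 (K r : R) : 0 <= r -> r < 1 -> (fun n : nat => K * r ^+ n) @ \oo --> 0.
Proof.
move=> r0 r1; rewrite -(mulr0 K); apply: cvgMr.
by apply: cvg_expr; rewrite ger0_norm.
Qed.

Lemma small_le0 (a K r : R) : 0 <= r -> r < 1 -> (forall n, a <= K * r ^+ n) -> a <= 0.
Proof.
move=> r0 r1 h.
have hc := geo0 K r r0 r1.
rewrite -(cvg_lim _ hc) //. apply: (@limr_ge _ _ _ R a (fun n => K * r ^+ n)); first by apply/cvg_ex; exists 0.
by apply: nearW.
Qed.

Lemma geom_cauchy (a : nat -> R) (B r : R) : 0 <= B -> 0 <= r -> r < 1 ->
  (forall n m, (n <= m)%N -> (a m - a n) ^+ 2 <= B * r ^+ n) ->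
  exists l, a @ \oo --> l /\ forall n, (l - a n) ^+ 2 <= B * r ^+ n.
Proof.
move=> B0 r0 r1 h.
have ca : cvg (a @ \oo).
  apply: cauchy_cvg; apply: cauchy_exP => e e0.
  have hc := geo0 B r r0 r1.
  have [N _ HN] := (cvgrPdist_lt _ _).1 hc (e ^+ 2) (exprn_gt0 _ e0).
  rewrite /fmapE -ball_normE /ball_.
  exists (a N), N => // m /= hm.
  have := HN N (leqnn N); rewrite /= sub0r normrN => hb.
  have h1 := h N m hm.
  have h2 : `|a N - a m| ^+ 2 < e ^+ 2.
    rewrite real_normK ?num_real // -sqrrN opprB.
    by apply: le_lt_trans h1 (le_lt_trans (ler_norm _) hb).
  by rewrite -(ltr_pXn2r (n := 2)) // nnegrE ltW.
exists (lim (a @ \oo)); split => // n.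
set l := lim (a @ \oo).
set sq := Num.sqrt (B * r ^+ n).
have sq0 : 0 <= sq by apply: sqrtr_ge0.
have hm : forall m, (n <= m)%N -> `|a m - a n| <= sq.
  move=> m hm; rewrite -sqrtr_sqr; apply: ler_wsqrtr; exact: h.
have hl1 : l <= a n + sq.
  apply: limr_le => //; exists n => // m /= hnm.
  have := hm m hnm; have := ler_norm (a m - a n); lra.
have hl2 : a n - sq <= l.
  apply: limr_ge => //; exists n => // m /= hnm.
  have := hm m hnm; have := ler_norm (- (a m - a n)); rewrite normrN; lra.
have e : B * r ^+ n = sq ^+ 2 by rewrite sqr_sqrtr // mulr_ge0 // exprn_ge0.
rewrite e; nra.
Qed.

End An.
Arguments small_le0 {R}. Arguments geom_cauchy {R}. Arguments geo0 {R}.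

Section Prob.
Variables (R : realType) (N M : nat) (U : 'M[R]_N) (fL fU : nat).
Variables (v : 'I_M -> 'I_N) (s : 'I_M -> R).
Hypothesis hU : U^T *m U = 1%:M.
Hypothesis hs : forall i, s i = 1 \/ s i = 0 \/ s i = -1.
Local Notation vec := 'cV[R]_N.
Implicit Types x y z w : vec.

Lemma sqn_mx y : sqn y = (y^T *m y) 0 0.
Proof. by rewrite /sqn mxE; apply: eq_bigr => j _; rewrite mxE expr2. Qed.

Lemma sqn_orth (Q : 'M[R]_N) y : Q^T *m Q = 1%:M -> sqn (Q *m y) = sqn y.
Proof. by move=> hQ; rewrite !sqn_mx trmx_mul mulmxA -(mulmxA y^T) hQ mulmx1. Qed.

Lemma hUt : U *m U^T = 1%:M.
Proof. exact: mulmx1C. Qed.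

Lemma Pb_contr w : sqn (Pb U fL fU *m w) <= sqn w.
Proof.
rewrite /Pb -!mulmxA sqn_orth //.
rewrite -(sqn_orth U^T w) ?trmxK ?hUt //.
rewrite /sqn; apply: ler_sum => k _; rewrite mul_diag_mx !mxE.
by case: ifP => _; rewrite ?mul1r ?mul0r // expr0n sqr_ge0.
Qed.

Lemma Pb_fix z : Cb U fL fU z -> Pb U fL fU *m z = z.
Proof.
move=> hz; rewrite /Pb -!mulmxA.
have -> : diag_mx (\row_k (if in_band fL fU k then 1 else 0)) *m (U^T *m z) = U^T *m z.
  apply/matrixP => k j; rewrite (ord1 j) mul_diag_mx mxE mxE.
  by case: ifPn => hk; [rewrite mul1r | rewrite mul0r hz].
by rewrite mulmxA hUt mul1mx.
Qed.

Lemma Pb_in y : Cb U fL fU (Pb U fL fU *m y).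
Proof.
move=> k hk; rewrite /Pb !mulmxA hU mul1mx -mulmxA mul_diag_mx !mxE.
by rewrite (negbTE hk) mul0r.
Qed.

Lemma Pv_coord x z j : Cv v s z ->
  (Pv v s x j 0 - z j 0) ^+ 2 + (x j 0 - Pv v s x j 0) ^+ 2 <= (x j 0 - z j 0) ^+ 2.
Proof.
move=> hz; rewrite mxE; case: ifPn => [/existsP [i /andP [/eqP hij hsg]] | _];
  last by rewrite subrr expr0n addr0.
subst j; have [hz1 hz2] := hz i; rewrite sub0r sqrrN subr0.
suff : x (v i) 0 * z (v i) 0 <= 0 by move=> h; lra.
case: (hs i) => [e|[e|e]].
- have hx : x (v i) 0 <= 0.
    rewrite leNgt; apply/negP => hx; move: hsg; rewrite gtr0_sg // e eqxx.
    done.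
  have hzz : 0 <= z (v i) 0 by have := hz1; rewrite e mul1r; apply; rewrite oner_eq0.
  by rewrite mulr_le0_ge0.
- by rewrite hz2 // mulr0.
- have hx : 0 <= x (v i) 0.
    rewrite leNgt; apply/negP => hx; move: hsg; rewrite ltr0_sg // e eqxx.
    done.
  have hzz : z (v i) 0 <= 0.
    have := hz1; rewrite e mulN1r oppr_ge0; apply; rewrite oppr_eq0 oner_eq0.
    done.
  by rewrite mulr_ge0_le0.
Qed.

Lemma F1 x z : Cb U fL fU z -> Cv v s z ->
  sqn (Pb U fL fU *m Pv v s x - z) + sqn (x - Pv v s x) <= sqn (x - z).
Proof.
move=> hb hv.
have -> : Pb U fL fU *m Pv v s x - z = Pb U fL fU *m (Pv v s x - z).
  by rewrite mulmxBr (Pb_fix z hb).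
apply: le_trans (lerD (Pb_contr _) (lexx _)) _.

rewrite /sqn -big_split; apply: ler_sum => j _; rewrite !mxE.
have := Pv_coord x z j hv; rewrite !mxE; exact.
Qed.

Definition csl : seq ('I_N * R) :=
  [seq (v i, 1) | i <- enum 'I_M & 0 <= s i] ++ [seq (v i, -1) | i <- enum 'I_M & s i <= 0].

Lemma csl_sig c : c \in csl -> c.2 = 1 \/ c.2 = -1.
Proof. by rewrite mem_cat => /orP[] /mapP [i _ ->] /=; [left|right]. Qed.

Lemma csl_Cv z : Bs csl z -> Cv v s z.
Proof.
move=> hB i.
have h1 : 0 <= s i -> 0 <= z (v i) 0.
  move=> hi; have := hB (v i, 1); rewrite /= mul1r; apply.
  by rewrite mem_cat (map_f (fun i => (v i, 1))) // mem_filter hi mem_enum.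
have h2 : s i <= 0 -> z (v i) 0 <= 0.
  move=> hi; have := hB (v i, -1); rewrite /= mulN1r oppr_ge0; apply.
  by rewrite mem_cat (map_f (fun i => (v i, -1))) ?orbT // mem_filter hi mem_enum.
split.
  move=> sn0; case: (hs i) => [e|[e|e]]; rewrite e ?mul1r ?mulN1r ?oppr_ge0.
  - by apply: h1; rewrite e ler01.
  - by move: sn0; rewrite e eqxx.
  - by apply: h2; rewrite e lerN10.
by move=> e; apply/eqP; rewrite eq_le h2 ?h1 // e.
Qed.

Lemma csl_viol x c : c \in csl -> viol c x <= `|x c.1 0 - Pv v s x c.1 0|.
Proof.
rewrite mem_cat => /orP[] /mapP [i]; rewrite mem_filter => /andP [hi _] -> /=.
  rewrite /viol /= mul1r.
  case: (leP 0 (x (v i) 0)) => hx.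
    by rewrite max0_0 ?oppr_le0.
  rewrite mxE; have -> : [exists i0, (v i0 == v i) && (Num.sg (x (v i) 0) != s i0)].
    apply/existsP; exists i; rewrite eqxx /= ltr0_sg //; apply/eqP => h.
    by rewrite -h in hi; lra.
  by rewrite subr0 (max0_id (- x (v i) 0)) ?ltr0_norm // oppr_ge0 ltW.
rewrite /viol /= mulN1r opprK.
case: (leP (x (v i) 0) 0) => hx.
  done.
rewrite mxE; have -> : [exists i0, (v i0 == v i) && (Num.sg (x (v i) 0) != s i0)].
  apply/existsP; exists i; rewrite eqxx /= gtr0_sg //; apply/eqP => h.
  by rewrite -h in hi; lra.
by rewrite subr0 gtr0_norm.
Qed.

Lemma sum_le_const (cs : seq ('I_N * R)) (f : 'I_N * R -> R) K :
  (forall c, c \in cs -> f c <= K) -> \sum_(c <- cs) f c <= (size cs)%:R * K.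
Proof.
elim: cs => [|c cs IH] h; first by rewrite big_nil mul0r.
rewrite big_cons /= -add1n natrD mulrDl mul1r; apply: lerD.
  by apply: h; rewrite mem_head.
by apply: IH => c' hc'; apply: h; rewrite in_cons hc' orbT.
Qed.

Lemma Vs_bound x : Vs csl x <= (size csl)%:R * Num.sqrt (sqn (x - Pv v s x)).
Proof.
apply: sum_le_const => c hc; apply: le_trans (csl_viol x c hc) _.
set y := Pv v s x.
rewrite -sqrtr_sqr; apply: ler_wsqrtr.
by have := coord_sq_le (x - y) c.1; rewrite [(x - y) _ _]mxE [(- y) _ _]mxE.
Qed.

End Prob.

Theorem theorem1 (R : realType) (N : nat) (W U : 'M[R]_N) (lam : 'rV[R]_N)
  (fL fU M : nat) (v : 'I_M -> 'I_N) (xsig : 'cV[R]_N) :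
  W^T = W -> (forall i j, 0 <= W i j) -> connected_graph W ->
  U^T *m U = 1%:M ->
  laplacian W = U *m diag_mx lam *m U^T ->
  (forall i j : 'I_N, (i <= j)%N -> lam 0 i <= lam 0 j) ->
  (forall i : 'I_N, nat_of_ord i = 0%N -> lam 0 i = 0) ->
  (1 <= fL)%N -> (fL <= fU)%N -> (fU <= N)%N ->
  injective v ->
  Cb U fL fU xsig ->
  let s := fun i : 'I_M => Num.sg (xsig (v i) 0) in
  let C := Cb U fL fU `&` Cv v s in
  exists q : R, 0 <= q < 1 /\
    forall x0 : 'cV[R]_N,
      let xs := fun n : nat => iter n (fun x => Pb U fL fU *m Pv v s x) x0 in
      exists xstar : 'cV[R]_N,
        C xstar /\ (forall j : 'I_N, (fun n => xs n j 0) @ \oo --> xstar j 0) /\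
        exists c : R, 0 <= c /\ forall n : nat, enorm (xs n - xstar) <= c * q ^+ n.
Proof.
move=> _ _ _ hU _ _ _ _ _ _ _ _ s C.
have hs : forall i, s i = 1 \/ s i = 0 \/ s i = -1.
  move=> i; rewrite /s; have [h|h|h] := ltrgtP (xsig (v i) 0) 0.
  - by right; right; rewrite ltr0_sg.
  - by left; rewrite gtr0_sg.
  - by right; left; rewrite h sgr0.
pose T := fun x : 'cV[R]_N => Pb U fL fU *m Pv v s x.
pose cs := csl R N M v s.
have hsub : subsp (Cb U fL fU).
  split; first by move=> k _; rewrite mulmx0 mxE.
  move=> a x y hx hy k hk; rewrite mulmxDr -scalemxAr.
  by rewrite mxD_entry mxZ_entry hx // hy // mulr0 addr0.
have [k0 [k0ge Hk]] := hoffman cs (csl_sig R N M v s) (Cb U fL fU) hsub.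
pose K := k0 * (size cs)%:R.
pose k2 := K ^+ 2 + 4.
pose q2 := 1 - k2^-1.
pose e2 := fun x : 'cV[R]_N => sqn (x - Pv v s x).
have k2p : 0 < k2 by have := sqr_ge0 K; rewrite /k2; lra.
have k2n0 : k2 != 0 by rewrite gt_eqF.
have ik2 : 0 < k2^-1 by rewrite invr_gt0.
have ik2' : k2^-1 <= 4^-1.
  rewrite lef_pV2 ?posrE //; have := sqr_ge0 K; rewrite /k2; lra.
have q2ge : 3 / 4 <= q2 by rewrite /q2; lra.
have q2lt : q2 < 1 by rewrite /q2; lra.
have q2ge0 : 0 <= q2 by lra.
have F1' : forall x z, C z -> sqn (T x - z) + e2 x <= sqn (x - z).
  by move=> x z [hb hv]; exact: (F1 R N M U fL fU v s hU hs x z hb hv).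
have reg : forall x, Cb U fL fU x -> exists z, C z /\ sqn (x - z) <= k2 * e2 x.
  move=> x hx; have [z [Az [Bz hz]]] := Hk x hx; exists z.
  split; first by split => //; exact: (csl_Cv R N M v s hs).
  have h1 := sqn_le_l1 (x - z).
  have hV := Vs_bound R N M v s x.
  have l0 := l1_ge0 (x - z).
  have sq0 := sqrtr_ge0 (e2 x).
  have hl : l1 (x - z) <= K * Num.sqrt (e2 x).
    apply: le_trans hz _; rewrite /K -mulrA; exact: ler_wpM2l.
  apply: le_trans h1 _.
  have hl2 : l1 (x - z) ^+ 2 <= (K * Num.sqrt (e2 x)) ^+ 2.
    by rewrite !expr2; apply: ler_pM.
  apply: le_trans hl2 _.
  rewrite exprMn sqr_sqrtr ?sqn_ge0 //; apply: ler_wpM2r; first exact: sqn_ge0.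
  by rewrite /k2 lerDl.
pose Ds := fun x : 'cV[R]_N => [set sqn (x - z) | z in C].
pose dsq := fun x => inf (Ds x).
have C0 : C 0.
  split; first by move=> k _; rewrite mulmx0 mxE.
  by move=> i; rewrite mxE mulr0; split.
have hlb : forall x, has_lbound (Ds x).
  by move=> x; exists 0 => _ [z _ <-]; exact: sqn_ge0.
have d1 : forall x z, C z -> dsq x <= sqn (x - z).
  move=> x z hz; have := @ge_inf R (Ds x) (hlb x); apply; by exists z.
have d2 : forall x a, (forall z, C z -> a <= sqn (x - z)) -> a <= dsq x.
  move=> x a h; apply: lb_le_inf; first by exists (sqn (x - 0)), 0.
  by move=> _ [z hz <-]; exact: h.
have d3 : forall x, 0 <= dsq x by move=> x; apply: d2 => z _; exact: sqn_ge0.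
have e2le : forall x z, C z -> e2 x <= sqn (x - z).
  by move=> x z hz; have := F1' x z hz; have := sqn_ge0 (T x - z); lra.
have e2d : forall x, e2 x <= dsq x by move=> x; apply: d2 => z hz; exact: e2le.
have rec : forall x, Cb U fL fU x -> dsq (T x) <= q2 * dsq x.
  move=> x hx.
  have h1 : dsq (T x) + e2 x <= dsq x.
    apply: d2 => z hz; apply: le_trans (F1' x z hz); exact: lerD (d1 _ _ hz) (lexx _).
  have h2 : dsq x <= k2 * e2 x.
    by have [z [hz hz2]] := reg x hx; exact: le_trans (d1 x z hz) hz2.
  have h3 : k2^-1 * dsq x <= e2 x.
    rewrite -[e2 x](mulKf k2n0); apply: ler_wpM2l => //; exact: ltW.
  by rewrite /q2 mulrBl mul1r; lra.
pose q := Num.sqrt q2.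
have q0 : 0 <= q by apply: sqrtr_ge0.
have q1 : q < 1 by rewrite /q -sqrtr1 ltr_sqrt //.
have qq : q ^+ 2 = q2 by rewrite sqr_sqrtr.
exists q; split; first by rewrite q0 q1.
move=> x0 xs.
pose y := fun n => xs n.+1.
have yS : forall n, y n.+1 = T (y n) by [].
have yCb : forall n, Cb U fL fU (y n) by move=> n; exact: Pb_in.
pose D1 := dsq (y 0).
have D10 : 0 <= D1 by exact: d3.
have dn : forall n, dsq (y n) <= q2 ^+ n * D1.
  elim=> [|n IH]; first by rewrite expr0 mul1r.
  rewrite yS; apply: le_trans (rec _ (yCb n)) _.
  by rewrite exprS -mulrA; apply: ler_wpM2l.
have fej : forall z, C z -> forall n m, sqn (y (n + m)%N - z) <= sqn (y n - z).
  move=> z hz n; elim=> [|m IH]; first by rewrite addn0.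
  rewrite addnS yS; apply: le_trans IH.
  by have := F1' (y (n + m)%N) z hz; have := sqn_ge0 (y (n + m)%N - Pv v s (y (n + m)%N)); rewrite /e2; lra.
have cau : forall n m, (n <= m)%N -> sqn (y m - y n) <= 4 * (q2 ^+ n * D1).
  move=> n m hnm; rewrite -(subnKC hnm).
  have : sqn (y (n + (m - n))%N - y n) / 4 <= dsq (y n).
    apply: d2 => z hz; have f := fej z hz n (m - n)%N.
    have := sqn_tri (y (n + (m - n))%N) (y n) z; lra.
  have := dn n; lra.
have [f hf] : {f : 'I_N -> R & forall j, (fun n => y n j 0) @ \oo --> f j /\
    forall n, (f j - y n j 0) ^+ 2 <= (4 * D1) * q2 ^+ n}.
  apply: (@choice _ _ (fun j l => (fun n => y n j 0) @ \oo --> l /\ forall n, (l - y n j 0) ^+ 2 <= (4 * D1) * q2 ^+ n)) => j; apply: geom_cauchy => //; first by rewrite mulr_ge0.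
  move=> n m hnm; have := coord_sq_le (y m - y n) j; rewrite mxB_entry => h.
  apply: le_trans h _; apply: le_trans (cau n m hnm) _.
  by have -> : 4 * D1 * q2 ^+ n = 4 * (q2 ^+ n * D1) by ring.
pose xstar : 'cV[R]_N := \col_j f j.
have xsE : forall j, xstar j 0 = f j by move=> j; rewrite mxE.
have fb : forall j n, (f j - y n j 0) ^+ 2 <= 4 * D1 * q2 ^+ n := fun j => (hf j).2.
have Kp : 0 <= 8 * D1 + 2 * k2 * D1 by have := mulr_ge0 (ltW k2p) D10; lra.
exists xstar; split.
  split.
    move=> i hi.
    have hq : forall n, Num.sqrt (4 * D1 * q2 ^+ n) = Num.sqrt (4 * D1) * q ^+ n.
      move=> n; rewrite sqrtrM ?mulr_ge0 //; congr (_ * _).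
      by rewrite -qq exprAC sqrtr_sqr ger0_norm // exprn_ge0.
    have hb : forall n, `|(U^T *m xstar) i 0| <=
        ((\sum_k `|U^T i k|) * Num.sqrt (4 * D1)) * q ^+ n.
      move=> n.
      have -> : (U^T *m xstar) i 0 = (U^T *m (xstar - y n)) i 0.
        by rewrite mulmxBr mxB_entry (yCb n i hi) subr0.
      rewrite mxE -mulrA -hq.
      apply: (sum_bound (fun k => U^T i k) (fun k => (xstar - y n) k 0)).
        by rewrite !mulr_ge0 // exprn_ge0.
      by move=> k; rewrite mxB_entry xsE fb.
    apply/eqP; rewrite -normr_le0; exact: (small_le0 _ _ _ q0 q1 hb).
  move=> i.
  have key : forall n, exists z, C z /\
      (f (v i) - z (v i) 0) ^+ 2 <= (8 * D1 + 2 * k2 * D1) * q2 ^+ n.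
    move=> n; have [z [hz hz2]] := reg (y n) (yCb n); exists z; split => //.
    have a1 := fb (v i) n.
    have a2 : (y n (v i) 0 - z (v i) 0) ^+ 2 <= k2 * (q2 ^+ n * D1).
      have := coord_sq_le (y n - z) (v i); rewrite mxB_entry => h; apply: le_trans h _.
      apply: le_trans hz2 _; apply: ler_wpM2l; first exact: ltW.
      exact: le_trans (e2d _) (dn n).
    have := sqr_ge0 ((f (v i) - y n (v i) 0) - (y n (v i) 0 - z (v i) 0)).
    lra.
  rewrite xsE; split.
    move=> sn0; case: (leP 0 (s i * f (v i))) => // hneg; exfalso.
    have : f (v i) ^+ 2 <= 0.
      apply: (small_le0 _ (8 * D1 + 2 * k2 * D1) q2) => // n.
      have [z [[_ hzv] hb]] := key n; have hz1 := (hzv i).1 sn0.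
      have hfz : f (v i) * z (v i) 0 <= 0.
        case: (hs i) => [e|[e|e]].
        - by rewrite e in hneg hz1; nra.
        - by move: sn0; rewrite e eqxx.
        - by rewrite e in hneg hz1; nra.
      have := sqr_ge0 (z (v i) 0); lra.
    move=> h; have h0 : f (v i) = 0 by apply/eqP; rewrite -sqrf_eq0 eq_le h sqr_ge0.
    by move: hneg; rewrite h0 mulr0 ltxx.
  move=> s0; apply/eqP; rewrite -sqrf_eq0 eq_le sqr_ge0 andbT.
  apply: (small_le0 _ (8 * D1 + 2 * k2 * D1) q2) => // n.
  have [z [[_ hzv] hb]] := key n; have hz2 := (hzv i).2 s0.
  by rewrite hz2 subr0 in hb.
split.
  move=> j; rewrite xsE -cvg_shiftS; exact: (hf j).1.
pose B' := N%:R * (4 * D1).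
have B0 : 0 <= B' by rewrite mulr_ge0 // mulr_ge0.
have hsq : forall n, sqn (y n - xstar) <= B' * q2 ^+ n.
  move=> n; rewrite /sqn.
  have : \sum_j (y n - xstar) j 0 ^+ 2 <= \sum_(j < N) (4 * D1 * q2 ^+ n).
    apply: ler_sum => j _; rewrite mxB_entry xsE -sqrrN opprB; exact: fb.
  move=> h; apply: le_trans h _; rewrite sumr_const card_ord -(mulr_natl (4 * D1 * q2 ^+ n) N) /B'.
  by rewrite mulrA.
pose c := enorm (x0 - xstar) + (3 * B' + 3).
have en0 : 0 <= enorm (x0 - xstar) by apply: sqrtr_ge0.
have c0 : 0 <= c by rewrite /c; lra.
have cB : B' <= c ^+ 2 * q2.
  have h3 : 3 * B' + 3 <= c by rewrite /c; lra.
  have c2 : (3 * B' + 3) ^+ 2 <= c ^+ 2 by rewrite !expr2; apply: ler_pM => //; lra.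
  have c3 : c ^+ 2 * (3 / 4) <= c ^+ 2 * q2 by apply: ler_wpM2l => //; exact: sqr_ge0.
  nra.
exists c; split => //.
case=> [|n].
  by rewrite expr0 mulr1 /c lerDl; lra.
change (Num.sqrt (sqn (y n - xstar)) <= c * q ^+ n.+1).
apply: le_trans (ler_wsqrtr (hsq n)) _.
rewrite -[c * q ^+ n.+1]ger0_norm ?mulr_ge0 ?exprn_ge0 // -sqrtr_sqr; apply: ler_wsqrtr.
rewrite exprMn [(q ^+ _) ^+ 2]exprAC qq [q2 ^+ n.+1]exprS mulrA; apply: ler_wpM2r => //; exact: exprn_ge0.
Qed.
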